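(* Let $H$ be a Hilbert space of finite dimension $M$ and let $(x_j)_{j=1}^N$ and $(f_j)_{j=1}^N$ be tight frames for $H$ with $\|x_j\|=\|f_j\|$ for all $1\leq j\leq N$. Let $C>0$ be the least constant such that $$\Big\|\sum_{j=1}^N \varepsilon_j\langle x, f_j\rangle x_j\Big\|\leq C\|x\| \qquad\text{for all } x\in H \text{ and all scalars } \varepsilon_j \text{ with } |\varepsilon_j|=1.$$ Then the tight frames $(x_j)_{j=1}^N$ and $(f_j)_{j=1}^N$ have the same frame bound $B=M^{-1}\sum_{j=1}^N\|x_j\|^2$, and $C\leq B\leq\frac{27}{4}K_1^{-4}C$.
   Context: A sequence $(y_j)_{j=1}^N$ in $H$ is a tight frame with frame bound $B>0$ if $\sum_{j=1}^N|\langle x,y_j\rangle|^2=B\|x\|^2$ for all $x\in H$. $K_1>0$ denotes the constant in Khintchine's inequality: for all $N\in\mathbb{N}$ and all scalars $(a_j)_{j=1}^N$, $2^{-N}\sum_{\delta_j=\pm1}\big|\sum_{j=1}^N\delta_j a_j\big|\geq K_1\big(\sum_{j=1}^N|a_j|^2\big)^{1/2}$. *)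

(* Defs.v *)
From HB Require Import structures.
From mathcomp Require Import all_boot all_order all_algebra.
From mathcomp Require Import reals.
From mathcomp.real_closed Require Import complex.
Set Implicit Arguments. Unset Strict Implicit. Unset Printing Implicit Defensive.
Import Order.TTheory GRing.Theory Num.Theory.
Local Open Scope ring_scope.

(* H = K^M, realized as column vectors 'cV[K]_M, where the scalar field K is
   either R (real Hilbert space: cj = id, ab = absolute value) or R[i]
   (complex Hilbert space: cj = complex conjugation, ab = modulus normc).
   cj : conjugation, ab : modulus K -> R. *)
Section Frames.
Variables (R : realType) (K : nzRingType) (cj : K -> K) (ab : K -> R).

Definition dotp (M : nat) (x y : 'cV[K]_M) : K := \sum_i x i 0 * cj (y i 0).

Definition vnorm (M : nat) (x : 'cV[K]_M) : R := Num.sqrt (\sum_i ab (x i 0) ^+ 2).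

Definition tight_frame (M N : nat) (y : 'I_N -> 'cV[K]_M) (B : R) : Prop :=
  0 < B /\ forall x : 'cV[K]_M, \sum_j ab (dotp x (y j)) ^+ 2 = B * vnorm x ^+ 2.

Definition unimod_bound (M N : nat) (x f : 'I_N -> 'cV[K]_M) (c : R) : Prop :=
  forall (eps : 'I_N -> K), (forall j, ab (eps j) = 1) ->
  forall v : 'cV[K]_M, vnorm (\sum_j (eps j * dotp v (f j)) *: x j) <= c * vnorm v.

Definition least_unimod_const (M N : nat) (x f : 'I_N -> 'cV[K]_M) (C : R) : Prop :=
  0 < C /\ unimod_bound x f C /\
  forall c : R, 0 < c -> unimod_bound x f c -> C <= c.

Definition khintchine (K1 : R) : Prop :=
  forall (n : nat) (a : 'I_n -> K),
    K1 * Num.sqrt (\sum_j ab (a j) ^+ 2) <=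
    (2 ^+ n)^-1 * \sum_(d : {ffun 'I_n -> bool}) ab (\sum_j (-1) ^+ d j * a j).

End Frames.

(* Main.v *)
Require Import Defs.
From HB Require Import structures.
From mathcomp Require Import all_boot all_order all_algebra.
From mathcomp Require Import reals.
From mathcomp.real_closed Require Import complex.
From mathcomp Require Import ring lra.
Import Order.TTheory GRing.Theory Num.Theory.
Local Open Scope ring_scope.

Lemma cs_sq (R : realFieldType) (I : finType) (a b : I -> R) :
  (\sum_i a i * b i) ^+ 2 <= (\sum_i a i ^+ 2) * (\sum_i b i ^+ 2).
Proof.
have H : 0 <= \sum_i \sum_j (a i * b j - a j * b i) ^+ 2.
  by apply: sumr_ge0 => i _; apply: sumr_ge0 => j _; exact: sqr_ge0.
have E : \sum_i \sum_j (a i * b j - a j * b i) ^+ 2 =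
   \sum_i \sum_j (a i ^+ 2 * b j ^+ 2) + \sum_i \sum_j (a j ^+ 2 * b i ^+ 2)
                 - (\sum_i \sum_j (a i * b i) * (a j * b j)) *+ 2.
  rewrite -sumrMnl -big_split -sumrB /=; apply: eq_bigr => i _.
  rewrite -sumrMnl -big_split -sumrB /=; apply: eq_bigr => j _; ring.
rewrite E [X in _ + X - _]exchange_big /= in H.
have F : forall (c d : I -> R), \sum_i \sum_j c i * d j = (\sum_i c i) * (\sum_i d i).
  by move=> c d; rewrite mulr_suml; apply: eq_bigr => i _; rewrite mulr_sumr.
rewrite !F mulr2n in H.
rewrite expr2; lra.
Qed.
Lemma cs_sqrt (R : rcfType) (I : finType) (a b : I -> R) :
  \sum_i a i * b i <= Num.sqrt (\sum_i a i ^+ 2) * Num.sqrt (\sum_i b i ^+ 2).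
Proof.
have [S0|S0] := lerP (\sum_i a i * b i) 0.
  apply: (le_trans S0); exact: mulr_ge0 (sqrtr_ge0 _) (sqrtr_ge0 _).
rewrite -sqrtrM; last by apply: sumr_ge0 => i _; exact: sqr_ge0.
rewrite -[X in X <= _]ger0_norm ?(ltW S0) // -sqrtr_sqr.
apply: ler_wsqrtr; exact: cs_sq.
Qed.

Lemma eqle (R : numDomainType) (x y : R) : x = y -> x <= y.
Proof. by move=> ->. Qed.

Lemma sum_sv (R : realType) (M : nat) (c : R) : \sum_(d : {ffun 'I_M -> bool}) c = c * 2 ^+ M.
Proof. by rewrite sumr_const card_ffun card_bool card_ord -[c *+ _]mulr_natr natrX. Qed.

Section Gen.
Variables (R : realType) (K : comNzRingType) (cj : K -> K) (ab : K -> R) (emb : R -> K).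
Hypotheses (ab_ge0 : forall z, 0 <= ab z)
  (abM : forall a b, ab (a * b) = ab a * ab b)
  (abD : forall a b, ab (a + b) <= ab a + ab b)
  (ab0 : ab 0 = 0) (ab1 : ab 1 = 1) (abN : forall a, ab (- a) = ab a)
  (abJ : forall a, ab (cj a) = ab a)
  (cjD : forall a b, cj (a + b) = cj a + cj b) (cj0 : cj 0 = 0)
  (cjM : forall a b, cj (a * b) = cj a * cj b) (cjK : forall a, cj (cj a) = a)
  (embD : forall a b, emb (a + b) = emb a + emb b) (emb0 : emb 0 = 0)
  (ab_emb : forall r, 0 <= r -> ab (emb r) = r)
  (mulJ : forall a, a * cj a = emb (ab a ^+ 2))
  (phase : forall z, exists e, ab e = 1 /\ e * z = emb (ab z)).

Local Notation dot := (dotp cj).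
Local Notation nrm := (vnorm ab).

Lemma emb_sum (I : finType) (F : I -> R) : emb (\sum_i F i) = \sum_i emb (F i).
Proof. exact: (big_morph emb embD emb0). Qed.

Lemma cj_sum (I : finType) (F : I -> K) : cj (\sum_i F i) = \sum_i cj (F i).
Proof. exact: (big_morph cj cjD cj0). Qed.

Lemma ab_sum (I : finType) (F : I -> K) : ab (\sum_i F i) <= \sum_i ab (F i).
Proof.
elim/big_rec2: _ => [|i y1 y2 _ H]; first by rewrite ab0.
by apply: le_trans (abD _ _) _; rewrite lerD2l.
Qed.

Lemma nrm_ge0 M (u : 'cV[K]_M) : 0 <= nrm u.
Proof. exact: sqrtr_ge0. Qed.

Lemma nrm_sq M (u : 'cV[K]_M) : nrm u ^+ 2 = \sum_i ab (u i 0) ^+ 2.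
Proof. by rewrite sqr_sqrtr //; apply: sumr_ge0 => i _; exact: sqr_ge0. Qed.

Lemma ab_dot_self M (u : 'cV[K]_M) : ab (dot u u) = nrm u ^+ 2.
Proof.
rewrite nrm_sq /dotp.
under eq_bigr do rewrite mulJ.
rewrite -emb_sum ab_emb //; apply: sumr_ge0 => i _; exact: sqr_ge0.
Qed.

Lemma ab_dotC M (u w : 'cV[K]_M) : ab (dot u w) = ab (dot w u).
Proof.
rewrite -abJ /dotp cj_sum; congr ab; apply: eq_bigr => i _.
by rewrite cjM cjK mulrC.
Qed.

Lemma dot_suml M (I : finType) (c : I -> K) (y : I -> 'cV[K]_M) w :
  dot (\sum_j c j *: y j) w = \sum_j c j * dot (y j) w.
Proof.
rewrite /dotp; under eq_bigr do rewrite summxE mulr_suml.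
rewrite exchange_big /=; apply: eq_bigr => j _; rewrite mulr_sumr.
by apply: eq_bigr => i _; rewrite mxE mulrA.
Qed.

Lemma ab_dot_le M (u w : 'cV[K]_M) : ab (dot u w) <= nrm u * nrm w.
Proof.
rewrite /dotp; apply: le_trans (ab_sum _ _) _.
rewrite /vnorm; under eq_bigr do rewrite abM abJ.
exact: cs_sqrt.
Qed.

Lemma ab_sign (k : nat) : ab ((-1) ^+ k) = 1.
Proof. by elim: k => [|k IH]; rewrite ?expr0 // exprS abM IH mulr1 abN. Qed.


Lemma sum_mul2 (I J : finType) (c : I -> R) (d : J -> R) :
  \sum_i \sum_j c i * d j = (\sum_i c i) * (\sum_j d j).
Proof. by rewrite mulr_suml; apply: eq_bigr => i _; rewrite mulr_sumr. Qed.

Lemma frame_bound M N (y : 'I_N -> 'cV[K]_M) B :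
  tight_frame cj ab y B -> \sum_j nrm (y j) ^+ 2 = B *+ M.
Proof.
case=> _ H.
have Hi : forall i : 'I_M, \sum_j ab (y j i 0) ^+ 2 = B.
  move=> i; have := H (delta_mx i 0).
  have D : forall z : 'cV[K]_M, dot (delta_mx i 0) z = cj (z i 0).
    move=> z; rewrite /dotp (bigD1 i) //= big1 ?addr0 => [|k ki].
      by rewrite !mxE eqxx mul1r.
    by rewrite !mxE (negbTE ki) mul0r.
  have Nn : nrm (delta_mx i 0) ^+ 2 = 1.
    rewrite nrm_sq (bigD1 i) //= big1 ?addr0 => [|k ki].
      by rewrite !mxE eqxx ab1 expr1n.
    by rewrite !mxE (negbTE ki) ab0 expr0n.
  by under eq_bigr do rewrite D abJ; rewrite Nn mulr1.
under eq_bigr do rewrite nrm_sq.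
rewrite exchange_big /=; under eq_bigr do rewrite Hi.
by rewrite sumr_const card_ord.
Qed.

Lemma ub M N (x f : 'I_N -> 'cV[K]_M) B :
  tight_frame cj ab x B -> tight_frame cj ab f B -> unimod_bound cj ab x f B.
Proof.
case=> B0 Hx [_ Hf] eps Heps v.
set u := \sum_j _.
have key : nrm u ^+ 2 <= B * nrm v * nrm u.
  rewrite -ab_dot_self /u dot_suml.
  apply: le_trans (ab_sum _ _) _.
  under eq_bigr => j _ do rewrite !abM Heps mul1r (ab_dotC _ (x j)).
  apply: le_trans (cs_sqrt _ _ _ _) _.
  rewrite Hf Hx !(sqrtrM _ (ltW B0)) !sqrtr_sqr !ger0_norm ?nrm_ge0 //.
  have sB : Num.sqrt B ^+ 2 = B := sqr_sqrtr (ltW B0).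
  set s := Num.sqrt B in sB *; rewrite -sB; apply: eqle; ring.
have := nrm_ge0 _ u; rewrite le0r => /orP[/eqP->|pu].
  by rewrite mulr_ge0 ?nrm_ge0 ?(ltW B0).
by rewrite -(ler_pM2r pu) -expr2.
Qed.

Definition sv M (d : {ffun 'I_M -> bool}) : 'cV[K]_M := \col_i (-1) ^+ d i.

Lemma nrm_sv M d : nrm (@sv M d) = Num.sqrt M%:R.
Proof.
rewrite /vnorm; congr Num.sqrt.
under eq_bigr do rewrite mxE ab_sign expr1n.
by rewrite sumr_const card_ord.
Qed.

Lemma khin M K1 (Hk : khintchine ab K1) (y : 'cV[K]_M) :
  2 ^+ M * K1 * nrm y <= \sum_d ab (dot (@sv M d) y).
Proof.
have := Hk M (fun i => cj (y i 0)).
under eq_bigr do rewrite abJ.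
have -> : \sum_(d : {ffun 'I_M -> bool}) ab (\sum_j (-1) ^+ d j * cj (y j 0)) = \sum_d ab (dot (@sv M d) y).
  apply: eq_bigr => d _; congr ab; apply: eq_bigr => i _; by rewrite mxE.
rewrite ler_pdivlMl ?exprn_gt0 // => H.
by rewrite -mulrA; exact: H.
Qed.

Lemma card_sv M : #|{ffun 'I_M -> bool}|%:R = (2 : R) ^+ M.
Proof. by rewrite card_ffun card_bool card_ord natrX. Qed.

Lemma lb M N (x f : 'I_N -> 'cV[K]_M) C K1 : 0 <= K1 -> khintchine ab K1 ->
  unimod_bound cj ab x f C -> 0 <= C ->
  K1 ^+ 2 * \sum_j nrm (f j) * nrm (x j) <= C * M%:R.
Proof.
move=> K0 Hk Hub C0.
have step1 : forall d d', \sum_j ab (dot (@sv M d) (f j)) * ab (dot (@sv M d') (x j)) <= C * M%:R.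
  move=> d d'.
  have [e He] := fin_all_exists (fun j => phase (dot (sv _ d) (f j) * dot (x j) (sv _ d'))).
  set u := \sum_j (e j * dot (sv _ d) (f j)) *: x j.
  have Hu := Hub e (fun j => (He j).1) (sv _ d).
  have : ab (dot u (sv _ d')) <= C * M%:R.
    apply: le_trans (ab_dot_le _ _ _) _.
    apply: le_trans (ler_wpM2r (nrm_ge0 _ _) Hu) _.
    by rewrite -mulrA !nrm_sv -expr2 sqr_sqrtr.
  rewrite /u dot_suml.
  under eq_bigr => j _ do rewrite -mulrA (He j).2.
  rewrite -emb_sum ab_emb; last by apply: sumr_ge0 => j _.
  by under eq_bigr => j _ do rewrite abM (ab_dotC _ (x j)).
have S : \sum_(d : {ffun 'I_M -> bool}) \sum_(d' : {ffun 'I_M -> bool})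
    \sum_j ab (dot (@sv M d) (f j)) * ab (dot (@sv M d') (x j)) <=
    \sum_(d : {ffun 'I_M -> bool}) \sum_(d' : {ffun 'I_M -> bool}) C * M%:R.
  by apply: ler_sum => d _; apply: ler_sum => d' _; exact: (step1 d d').
have T : \sum_(d : {ffun 'I_M -> bool}) \sum_(d' : {ffun 'I_M -> bool}) C * M%:R
    = C * M%:R * (2 ^+ M * 2 ^+ M).
  rewrite !sum_sv; ring.
rewrite T in S.
have E : \sum_(d : {ffun 'I_M -> bool}) \sum_(d' : {ffun 'I_M -> bool}) \sum_j ab (dot (@sv M d) (f j)) * ab (dot (@sv M d') (x j))
   = \sum_j (\sum_d ab (dot (@sv M d) (f j))) * (\sum_d ab (dot (@sv M d) (x j))).
  under eq_bigr do rewrite exchange_big /=.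
  rewrite exchange_big /=; apply: eq_bigr => j _; exact: sum_mul2.
rewrite E in S.
have L : \sum_j (2 ^+ M * K1 * nrm (f j)) * (2 ^+ M * K1 * nrm (x j)) <=
   \sum_j (\sum_d ab (dot (@sv M d) (f j))) * (\sum_d ab (dot (@sv M d) (x j))).
  apply: ler_sum => j _; apply: ler_pM; rewrite ?khin //;
  by rewrite !mulr_ge0 ?nrm_ge0 ?exprn_ge0.
have P0 : (0 : R) < 2 ^+ M * 2 ^+ M by rewrite mulr_gt0 ?exprn_gt0.
rewrite -(ler_pM2l P0).
rewrite [X in _ <= X]mulrC; apply: (le_trans _ (le_trans L S)).
rewrite mulr_sumr mulr_sumr; apply: eqle; apply: eq_bigr => j _; ring.
Qed.

Lemma K1_le1 K1 : khintchine ab K1 -> K1 <= 1.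
Proof.
move=> Hk; have := Hk 1%N (fun _ => 1).
rewrite big_ord1 ab1 expr1n sqrtr1 mulr1.
under eq_bigr do rewrite big_ord1 mulr1 ab_sign.
by rewrite sum_sv mul1r expr1 mulVf ?pnatr_eq0.
Qed.

Lemma main_gen M N (x f : 'I_N -> 'cV[K]_M) (Bx Bf C K1 : R) :
  0 < K1 -> khintchine ab K1 ->
  tight_frame cj ab x Bx -> tight_frame cj ab f Bf ->
  (forall j, nrm (x j) = nrm (f j)) ->
  least_unimod_const cj ab x f C ->
  let B := (M%:R)^-1 * \sum_j nrm (x j) ^+ 2 in
  [/\ Bx = B, Bf = B, C <= B & B <= 27 / 4 * K1 ^- 4 * C].
Proof.
move=> K0 Hk Hx Hf Hn [C0 [HC Hl]] B.
have M0 : (0 < M)%N.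
  case: (posnP M) => // M0; exfalso; subst M.
  have : C <= C / 2.
    apply: Hl; first by rewrite divr_gt0.
    by move=> eps _ v; rewrite /vnorm !big_ord0 sqrtr0 mulr0.
  lra.
have Mn : (M%:R : R) != 0 by rewrite pnatr_eq0 -lt0n.
have EB : forall B', tight_frame cj ab x B' -> B' = B.
  move=> B' H; rewrite /B (frame_bound _ _ _ _ H) -[B' *+ M]mulr_natr mulrC mulfK //.
have Exf : \sum_j nrm (x j) ^+ 2 = \sum_j nrm (f j) ^+ 2.
  by apply: eq_bigr => j _; rewrite Hn.
have EBx := EB _ Hx.
have EBf : Bf = B by rewrite /B Exf (frame_bound _ _ _ _ Hf) -[Bf *+ M]mulr_natr mulrC mulfK.
have B0 : 0 < B by rewrite -EBx; case: Hx.
have CB : C <= B.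
  apply: Hl => //; apply: ub; [rewrite -EBx | rewrite -EBf]; done.
have K11 := K1_le1 _ Hk.
have L := lb _ _ _ _ _ _ (ltW K0) Hk HC (ltW C0).
have SB : \sum_j nrm (f j) * nrm (x j) = B * M%:R.
  rewrite /B mulrC mulrA mulfV // mul1r; apply: eq_bigr => j _; by rewrite Hn expr2.
rewrite SB mulrA ler_pM2r ?lt0r ?Mn ?ler0n // in L.
split => //.
set k := K1 ^+ 2.
have k0 : 0 < k by rewrite exprn_gt0.
have k1 : k <= 1 by rewrite /k expr_le1 // ltW.
have e4 : K1 ^+ 4 = k * k by rewrite /k -expr2 -exprM.
rewrite e4.
set t := (k * k)^-1.
have t0 : 0 < t by rewrite invr_gt0 mulr_gt0.
have tk : t * (k * k) = 1 by rewrite mulVf // mulf_neq0 // gt_eqF.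
have s1 : B = t * (k * k * B) by rewrite mulrA tk mul1r.
have s2 : k * k * B <= k * B by rewrite -mulrA ler_piMl // mulr_ge0 // ltW.
have s5 : t * (k * k * B) <= t * (k * B) by rewrite ler_pM2l.
have s3 : t * (k * B) <= t * C by rewrite ler_pM2l.
have s4 : 0 <= t * C by rewrite mulr_ge0 ?(ltW t0) ?(ltW C0).
rewrite -mulrA; lra.
Qed.

End Gen.
Local Open Scope complex_scope.

Lemma real_inst (R : realType) (M N : nat) (x f : 'I_N -> 'cV[R]_M) (Bx Bf C K1 : R) :
     0 < K1 -> khintchine (@Num.norm _ R) K1 ->
     tight_frame id (@Num.norm _ R) x Bx -> tight_frame id (@Num.norm _ R) f Bf ->
     (forall j, vnorm (@Num.norm _ R) (x j) = vnorm (@Num.norm _ R) (f j)) ->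
     least_unimod_const id (@Num.norm _ R) x f C ->
     let B := (M%:R)^-1 * \sum_j vnorm (@Num.norm _ R) (x j) ^+ 2 in
     [/\ Bx = B, Bf = B, C <= B & B <= 27 / 4 * K1 ^- 4 * C].
Proof.
apply: (@main_gen R R id (@Num.norm _ R) id).
- exact: normr_ge0.
- exact: normrM.
- exact: ler_normD.
- exact: normr0.
- exact: normr1.
- exact: normrN.
- by [].
- by [].
- by [].
- by [].
- by [].
- by [].
- by [].
- exact: ger0_norm.
- by move=> a; rewrite /= real_normK ?num_real // expr2.
- move=> z; case: (lerP 0 z) => hz.
    by exists 1; rewrite normr1 mul1r ger0_norm.
  by exists (-1); rewrite normrN normr1 mulN1r ltr0_norm.
Qed.

Lemma nc (R : rcfType) (z : R[i]) : `|z| = (Normc.normc z)%:C.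
Proof. by case: z. Qed.

Lemma complex_inst (R : realType) (M N : nat) (x f : 'I_N -> 'cV[R[i]]_M) (Bx Bf C K1 : R) :
     0 < K1 -> khintchine (@Normc.normc R) K1 ->
     tight_frame (@conjc R) (@Normc.normc R) x Bx -> tight_frame (@conjc R) (@Normc.normc R) f Bf ->
     (forall j, vnorm (@Normc.normc R) (x j) = vnorm (@Normc.normc R) (f j)) ->
     least_unimod_const (@conjc R) (@Normc.normc R) x f C ->
     let B := (M%:R)^-1 * \sum_j vnorm (@Normc.normc R) (x j) ^+ 2 in
     [/\ Bx = B, Bf = B, C <= B & B <= 27 / 4 * K1 ^- 4 * C].
Proof.
apply: (@main_gen R R[i] (@conjc R) (@Normc.normc R) (real_complex R)).
- by case=> a b /=; exact: sqrtr_ge0.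
- exact: Normc.normcM.
- by move=> a b; have := ler_normD a b; rewrite !nc -rmorphD /= lecR.
- exact: Normc.normc0.
- exact: Normc.normc1.
- by move=> a; have := normrN a; rewrite !nc => -[].
- by case=> a b /=; rewrite sqrrN.
- by move=> a b; rewrite rmorphD.
- by rewrite rmorph0.
- by move=> a b; rewrite rmorphM.
- exact: conjcK.
- by move=> a b; rewrite rmorphD.
- by rewrite rmorph0.
- by move=> r r0 /=; rewrite expr0n addr0 sqrtr_sqr ger0_norm.
- by move=> a; rewrite -sqr_normc nc rmorphXn.
- move=> z; have [->|z0] := eqVneq z 0.
    by exists 1; rewrite Normc.normc1 mulr0 Normc.normc0.
  exists ((Normc.normc z)%:C / z); split; last by rewrite mulfVK.
  have nz : Normc.normc z != 0 by apply: contra z0 => /eqP/Normc.eq0_normc ->.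
  rewrite Normc.normcM Normc.normcV /= expr0n addr0 sqrtr_sqr ger0_norm ?mulfV //.
  by case: z {z0 nz} => a b /=; exact: sqrtr_ge0.
Qed.

Local Close Scope complex_scope.
Local Open Scope ring_scope.

Theorem corollary1p4 :
  (* real Hilbert spaces *)
  (forall (R : realType) (M N : nat) (x f : 'I_N -> 'cV[R]_M) (Bx Bf C K1 : R),
     0 < K1 -> khintchine (@Num.norm _ R) K1 ->
     tight_frame id (@Num.norm _ R) x Bx -> tight_frame id (@Num.norm _ R) f Bf ->
     (forall j, vnorm (@Num.norm _ R) (x j) = vnorm (@Num.norm _ R) (f j)) ->
     least_unimod_const id (@Num.norm _ R) x f C ->
     let B := (M%:R)^-1 * \sum_j vnorm (@Num.norm _ R) (x j) ^+ 2 in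
     [/\ Bx = B, Bf = B, C <= B & B <= 27 / 4 * K1 ^- 4 * C])
  /\
  (* complex Hilbert spaces *)
  (forall (R : realType) (M N : nat) (x f : 'I_N -> 'cV[R[i]]_M) (Bx Bf C K1 : R),
     0 < K1 -> khintchine (@Normc.normc R) K1 ->
     tight_frame (@conjc R) (@Normc.normc R) x Bx -> tight_frame (@conjc R) (@Normc.normc R) f Bf ->
     (forall j, vnorm (@Normc.normc R) (x j) = vnorm (@Normc.normc R) (f j)) ->
     least_unimod_const (@conjc R) (@Normc.normc R) x f C ->
     let B := (M%:R)^-1 * \sum_j vnorm (@Normc.normc R) (x j) ^+ 2 in
     [/\ Bx = B, Bf = B, C <= B & B <= 27 / 4 * K1 ^- 4 * C]).
Proof. split; [exact: real_inst | exact: complex_inst]. Qed.
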